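(* Let $n\ge 2$ be an integer. Then there is a one-to-one correspondence (bijection) between the set $\Sigma_{n^2}$ of all $n^2\times n^2$ S-permutation matrices and the set $\Pi_n$.
   Context: A binary matrix is a matrix with all entries in $\{0,1\}$. For $[n]=\{1,\dots,n\}$, an $n^2\times n^2$ binary matrix $A$ is partitioned by $n-1$ horizontal and $n-1$ vertical lines into $n^2$ non-intersecting $n\times n$ submatrices (blocks) $A_{kl}$, $1\le k,l\le n$, so that $A=[A_{kl}]_{k,l=1}^n$. $A$ is an S-permutation matrix if each row, each column and each block of $A$ contains exactly one entry equal to $1$; $\Sigma_{n^2}$ denotes the set of all $n^2\times n^2$ S-permutation matrices. $\Pi_n$ is the set of all $n\times n$ matrices $\pi$ whose entries are ordered pairs $\langle i,j\rangle$ with $1\le i,j\le n$, such that: for every row $[\langle a_1,b_1\rangle,\dots,\langle a_n,b_n\rangle]$ of $\pi$, the sequence $a_1,\dots,a_n$ is a permutation of $[n]$; and for every column $(\langle a_1,b_1\rangle,\dots,\langle a_n,b_n\rangle)^T$ of $\pi$, the sequence $b_1,\dots,b_n$ is a permutation of $[n]$. *)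

(* Defs.v *)
From mathcomp Require Import all_boot all_order all_algebra.
Set Implicit Arguments. Unset Strict Implicit. Unset Printing Implicit Defensive.

(* Indices are 0-based: rows/columns of an n^2 x n^2 matrix are 'I_(n*n).
   Row i (0-based) lies in block-row i %/ n, column j in block-column j %/ n,
   so block A_{kl} (0-based k,l : 'I_n) consists of the entries (i,j) with
   i %/ n = k and j %/ n = l. *)

Definition is_Sperm (n : nat) (A : 'M[bool]_(n * n)) : bool :=
  [&& [forall i : 'I_(n * n), #|[set j : 'I_(n * n) | A i j]| == 1],
      [forall j : 'I_(n * n), #|[set i : 'I_(n * n) | A i j]| == 1] &
      [forall k : 'I_n, forall l : 'I_n,
         #|[set ij : 'I_(n * n) * 'I_(n * n) |
              [&& ij.1 %/ n == k, ij.2 %/ n == l & A ij.1 ij.2]]| == 1]].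

Definition Sigma (n : nat) := {A : 'M[bool]_(n * n) | is_Sperm A}.

Definition is_Pi (n : nat) (p : 'M['I_n * 'I_n]_n) : bool :=
  [forall i : 'I_n, perm_eq [seq (p i j).1 | j <- enum 'I_n] (enum 'I_n)] &&
  [forall j : 'I_n, perm_eq [seq (p i j).2 | i <- enum 'I_n] (enum 'I_n)].

Definition Pi (n : nat) := {p : 'M['I_n * 'I_n]_n | is_Pi p}.

(* Main.v *)
Require Import Defs.
From mathcomp Require Import all_boot all_order all_algebra.

Section S.
Variable n : nat.

Lemma hi_lt (i : 'I_(n*n)) : i %/ n < n.
Proof. case: n i => [[]//|m i]; by rewrite ltn_divLR. Qed.
Lemma lo_lt (i : 'I_(n*n)) : i %% n < n.
Proof. case: n i => [[]//|m i]; by rewrite ltn_pmod. Qed.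
Lemma cmb_lt (k a : 'I_n) : k * n + a < n * n.
Proof.
have H : k.+1 * n <= n * n := leq_mul (ltn_ord k) (leqnn n).
rewrite mulSn in H; apply: leq_trans H; by rewrite addnC ltn_add2r (ltn_ord a).
Qed.

Definition hi (i : 'I_(n*n)) : 'I_n := Ordinal (hi_lt i).
Definition lo (i : 'I_(n*n)) : 'I_n := Ordinal (lo_lt i).
Definition cmb (k a : 'I_n) : 'I_(n*n) := Ordinal (cmb_lt k a).

Lemma hiK k a : hi (cmb k a) = k.
Proof.
have n0 : 0 < n by apply: leq_ltn_trans (ltn_ord k).
apply: val_inj => /=; by rewrite divnMDl // divn_small ?addn0.
Qed.
Lemma loK k a : lo (cmb k a) = a.
Proof.
have n0 : 0 < n by apply: leq_ltn_trans (ltn_ord k).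
apply: val_inj => /=; by rewrite modnMDl modn_small.
Qed.
Lemma cmbK i : cmb (hi i) (lo i) = i.
Proof. apply: val_inj => /=; by rewrite -divn_eq. Qed.
Lemma hiE (x : 'I_(n*n)) (k : 'I_n) : (hi x == k) = (x %/ n == k).
Proof. by []. Qed.

Lemma card1_eq (T : finType) (S : {set T}) x :
  (forall y, (y \in S) = (y == x)) -> #|S| == 1.
Proof.
move=> H; have -> : S = [set x] by apply/setP => y; rewrite H in_set1.
by rewrite cards1.
Qed.
Lemma card1_uniq (T : finType) (S : {set T}) x y :
  #|S| == 1 -> x \in S -> y \in S -> x = y.
Proof. by move/cards1P => [z ->]; rewrite !in_set1 => /eqP-> /eqP->. Qed.

Lemma perm_inj (f : 'I_n -> 'I_n) :
  perm_eq [seq f j | j <- enum 'I_n] (enum 'I_n) -> injective f.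
Proof.
move=> H; apply/injectiveP; rewrite /injectiveb /dinjectiveb.
by rewrite (perm_uniq H) enum_uniq.
Qed.
Lemma inj_perm (f : 'I_n -> 'I_n) :
  injective f -> perm_eq [seq f j | j <- enum 'I_n] (enum 'I_n).
Proof.
move=> finj; apply: uniq_perm; first by rewrite map_inj_uniq ?enum_uniq.
  exact: enum_uniq.
move=> x; rewrite mem_enum; have [g fK gK] := injF_bij finj.
by rewrite -(gK x) map_f ?mem_enum.
Qed.

Definition gm (p : 'M['I_n * 'I_n]_n) : 'M[bool]_(n*n) :=
  \matrix_(i, j) (p (hi i) (hi j) == (lo i, lo j)).

Lemma gm_S p : is_Pi p -> is_Sperm (gm p).
Proof.
case/andP => /forallP Hr /forallP Hc.
apply/and3P; split.
- apply/forallP => i.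
  have [r fr rf] := injF_bij (@perm_inj (fun j => (p (hi i) j).1) (Hr (hi i))).
  apply: (@card1_eq _ _ (cmb (r (lo i)) (p (hi i) (r (lo i))).2)) => y.
  rewrite inE mxE; apply/eqP/eqP.
  + move=> Hy.
    have E : hi y = r (lo i).
      by rewrite -(fr (hi y)) /= Hy.
    by rewrite -(cmbK y) -E Hy.
  + move=> ->; rewrite hiK loK.
    have := rf (lo i) => /= E.
    by rewrite [p _ _]surjective_pairing E.
- apply/forallP => j.
  have [r fr rf] := injF_bij (@perm_inj (fun k => (p k (hi j)).2) (Hc (hi j))).
  apply: (@card1_eq _ _ (cmb (r (lo j)) (p (r (lo j)) (hi j)).1)) => y.
  rewrite inE mxE; apply/eqP/eqP.
  + move=> Hy.
    have E : hi y = r (lo j).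
      by rewrite -(fr (hi y)) /= Hy.
    by rewrite -(cmbK y) -E Hy.
  + move=> ->; rewrite hiK loK.
    have := rf (lo j) => /= E.
    by rewrite [p _ _]surjective_pairing E.
- apply/forallP => k; apply/forallP => l.
  apply: (@card1_eq _ _ (cmb k (p k l).1, cmb l (p k l).2)) => [[y1 y2]].
  rewrite inE mxE /= -!hiE; apply/and3P/eqP.
  + move=> [/eqP E1 /eqP E2 /eqP E3].
    rewrite -(cmbK y1) -(cmbK y2) -E1 -E2 E3 /=.
    by rewrite E1 E2.
  + case=> -> ->; rewrite !hiK !loK; split => //.
    by rewrite -surjective_pairing.
Qed.

Definition Bset (A : 'M[bool]_(n*n)) (k l : 'I_n) :=
  [set ij : 'I_(n * n) * 'I_(n * n) |
              [&& ij.1 %/ n == k, ij.2 %/ n == l & A ij.1 ij.2]].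

Definition blk A k l := odflt (cmb k k, cmb l l) [pick ij in Bset A k l].

Lemma blk_in A k l : is_Sperm A -> blk A k l \in Bset A k l.
Proof.
case/and3P => _ _ /forallP /(_ k) /forallP /(_ l) H.
rewrite /blk; case: pickP => //= H0.
move/cards1P: H => [z Hz].
by have := H0 z; rewrite /Bset Hz in_set1 eqxx.
Qed.

Lemma blk_uniq A k l y : is_Sperm A -> y \in Bset A k l -> y = blk A k l.
Proof.
move=> HA Hy; have := @blk_in A k l HA.
case/and3P: HA => _ _ /forallP /(_ k) /forallP /(_ l) H.
exact: card1_uniq H Hy.
Qed.

Lemma blk_props A k l : is_Sperm A ->
  [/\ hi (blk A k l).1 = k, hi (blk A k l).2 = l & A (blk A k l).1 (blk A k l).2].
Proof.
move=> HA; have := @blk_in A k l HA; rewrite inE => /and3P [E1 E2 E3].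
by split => //; apply/eqP; rewrite hiE.
Qed.

Definition fm (A : 'M[bool]_(n*n)) : 'M['I_n * 'I_n]_n :=
  \matrix_(k, l) (lo (blk A k l).1, lo (blk A k l).2).

Lemma fm_Pi A : is_Sperm A -> is_Pi (fm A).
Proof.
move=> HA; have HA' := HA; case/and3P: HA' => /forallP Hr /forallP Hc _.
apply/andP; split.
- apply/forallP => k; apply: inj_perm => l l'; rewrite !mxE /= => E.
  have [a1 a2 a3] := @blk_props A k l HA.
  have [b1 b2 b3] := @blk_props A k l' HA.
  have Ei : (blk A k l).1 = (blk A k l').1.
    by rewrite -(cmbK (blk A k l).1) -(cmbK (blk A k l').1) a1 b1 E.
  have E2 := @card1_uniq _ _ (blk A k l).2 (blk A k l').2 (Hr (blk A k l).1).
  rewrite !inE a3 Ei b3 in E2; move: (E2 isT isT) => {}E2.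
  by rewrite -a2 -b2 E2.
- apply/forallP => l; apply: inj_perm => k k'; rewrite !mxE /= => E.
  have [a1 a2 a3] := @blk_props A k l HA.
  have [b1 b2 b3] := @blk_props A k' l HA.
  have Ei : (blk A k l).2 = (blk A k' l).2.
    by rewrite -(cmbK (blk A k l).2) -(cmbK (blk A k' l).2) a2 b2 E.
  have E2 := @card1_uniq _ _ (blk A k l).1 (blk A k' l).1 (Hc (blk A k l).2).
  rewrite !inE a3 Ei b3 in E2; move: (E2 isT isT) => {}E2.
  by rewrite -a1 -b1 E2.
Qed.

Lemma gmK A : is_Sperm A -> gm (fm A) = A.
Proof.
move=> HA; apply/matrixP => i j; rewrite !mxE.
have [a1 a2 a3] := @blk_props A (hi i) (hi j) HA.
apply/eqP/idP.
- move=> E; move: (congr1 fst E) (congr1 snd E) => /= E1 E2.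
  have Ei : (blk A (hi i) (hi j)).1 = i by rewrite -[LHS]cmbK -[RHS]cmbK a1 E1.
  have Ej : (blk A (hi i) (hi j)).2 = j by rewrite -[LHS]cmbK -[RHS]cmbK a2 E2.
  by rewrite Ei Ej in a3.
- move=> Aij.
  have <- : (i, j) = blk A (hi i) (hi j).
    apply: blk_uniq HA _; rewrite /Bset inE /=. by rewrite !eqxx Aij.
  by [].
Qed.

Lemma fmK p : is_Pi p -> fm (gm p) = p.
Proof.
move=> Hp; have HS := @gm_S p Hp.
apply/matrixP => k l; rewrite mxE.
have <- : (cmb k (p k l).1, cmb l (p k l).2) = blk (gm p) k l.
  apply: blk_uniq HS _; rewrite /Bset inE mxE.
  rewrite -(hiE (cmb k (p k l).1)) -(hiE (cmb l (p k l).2)) !hiK !loK !eqxx.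
  by rewrite -surjective_pairing eqxx.
by rewrite /= !loK -surjective_pairing.
Qed.

End S.

Theorem mainTheorem1 (n : nat) (hn : 2 <= n) :
  exists f : Sigma n -> Pi n, bijective f.
Proof.
pose F (s : Sigma n) : Pi n := exist _ (@fm n (val s)) (@fm_Pi n _ (valP s)).
pose G (p : Pi n) : Sigma n := exist _ (@gm n (val p)) (@gm_S n _ (valP p)).
exists F; exists G.
- move=> s; apply: val_inj; exact: (@gmK n _ (valP s)).
- move=> p; apply: val_inj; exact: (@fmK n _ (valP p)).
Qed.
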